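(* Let $k$ be a positive integer and $I \subseteq \{1,\dots,k\}$. Let $G$ be a $(26k+24|I|)$-connected graph and let $S = \{\{s_1,t_1\},\dots,\{s_k,t_k\}\}$ where $s_1,\dots,s_k,t_1,\dots,t_k$ are $2k$ distinct vertices of $G$. Then some nice partition of $G$ has a parity breaking matching for $(S,I)$ if and only if every nice partition of $G$ has a parity breaking matching for $(S,I)$.
   Context: All graphs are finite and simple. A partition $(A,B)$ of $G$ is a partition of $V(G)$ into two sets $A,B$. For such a partition, $G_{A,B}$ denotes the graph $G[A] \cup G[B]$, i.e. the graph whose edges are the edges of $G$ with both ends in $A$ or both ends in $B$. An odd cycle cover of $G$ is a set $X \subseteq V(G)$ such that $G - X$ is bipartite; it is minimum if it has the smallest possible size. A partition $(A,B)$ of $G$ is nice if there is a minimum odd cycle cover $X$ of $G$ such that $A \setminus X$ and $B \setminus X$ are both independent sets of $G$, every vertex of $X$ having more neighbours in $B\setminus X$ than in $A \setminus X$ lies in $A$, and every vertex of $X$ having more neighbours in $A\setminus X$ than in $B\setminus X$ lies in $B$. For $S = \{\{s_1,t_1\},\dots,\{s_k,t_k\}\}$ and $I \subseteq \{1,\dots,k\}$, a parity breaking matching for $(S,I)$ with respect to a partition $(A,B)$ is a matching $M = \{m_i\}_{i \in I}$ of $G$ (indexed by $I$) with $M \subseteq E(G_{A,B})$ such that $m_i \cap \{s_j,t_j\} = \emptyset$ for all $i \in I$ and all $j \in \{1,\dots,k\}$ with $j \neq i$. *)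

(* Defs.v *)
(* A simple graph on a finite vertex type T is given by a
   symmetric irreflexive relation e : rel T. *)
From mathcomp Require Import all_boot.
Set Implicit Arguments. Unset Strict Implicit. Unset Printing Implicit Defensive.

Section Graphs.
Variables (T : finType) (e : rel T).

Definition del_rel (X : {set T}) : rel T :=
  fun x y => [&& e x y, x \notin X & y \notin X].

Definition k_connected (c : nat) : Prop :=
  c < #|T| /\
  forall X : {set T}, #|X| < c ->
    forall u v, u \notin X -> v \notin X -> connect (del_rel X) u v.

Definition independent (A : {set T}) : Prop :=
  forall u v, u \in A -> v \in A -> ~~ e u v.

Definition bipartite_minus (X : {set T}) : Prop :=
  exists c : T -> bool, forall u v, u \notin X -> v \notin X -> e u v -> c u != c v.

Definition odd_cycle_cover (X : {set T}) : Prop := bipartite_minus X.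

Definition min_odd_cycle_cover (X : {set T}) : Prop :=
  odd_cycle_cover X /\ forall Y : {set T}, odd_cycle_cover Y -> #|X| <= #|Y|.

Definition ndeg (x : T) (A : {set T}) : nat := #|[set y in A | e x y]|.

Definition nice (A : {set T}) : Prop :=
  let B := ~: A in
  exists X : {set T}, [/\ min_odd_cycle_cover X,
    independent (A :\: X), independent (B :\: X),
    (forall x, x \in X -> ndeg x (A :\: X) < ndeg x (B :\: X) -> x \in A) &
    (forall x, x \in X -> ndeg x (B :\: X) < ndeg x (A :\: X) -> x \in B)].

Definition part_edge (A : {set T}) (u v : T) : bool :=
  e u v && ((u \in A) == (v \in A)).

(* A parity breaking matching for (S, I) w.r.t. the partition (A, ~: A),
   where S = {{s i, t i} | i < k}.  The matching is M = {m_i}_{i in I},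
   m_i = {(m i).1, (m i).2}. *)
Definition parity_breaking_matching (k : nat) (s t : 'I_k -> T) (I : {set 'I_k})
    (A : {set T}) (m : 'I_k -> T * T) : Prop :=
  [/\ (forall i, i \in I -> part_edge A (m i).1 (m i).2),
      (forall i j, i \in I -> j \in I -> i != j ->
         [disjoint [set (m i).1; (m i).2] & [set (m j).1; (m j).2]]) &
      (forall i j, i \in I -> j != i ->
         [disjoint [set (m i).1; (m i).2] & [set s j; t j]])].

Definition has_pbm (k : nat) (s t : 'I_k -> T) (I : {set 'I_k}) (A : {set T}) : Prop :=
  exists m : 'I_k -> T * T, parity_breaking_matching s t I A m.

End Graphs.

(* Main.v *)
Require Import Defs.
From mathcomp Require Import all_boot zify.
From Stdlib Require Import Classical.
Set Implicit Arguments. Unset Strict Implicit.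
Lemma disj2 (T : finType) (a b : T) (S : {set T}) :
  [disjoint [set a; b] & S] = (a \notin S) && (b \notin S).
Proof.
apply/pred0P/andP.
- move=> H; split; apply/negP=> Hx.
  + by have := H a; rewrite /= !inE eqxx Hx.
  + by have := H b; rewrite /= !inE eqxx Hx orbT.
- case=> Ha Hb x /=; rewrite !inE; apply/andP=> [[/orP [] /eqP -> ]]; by apply/negP.
Qed.
Lemma cardU_le (T : finType) (A B : {set T}) : #|A :|: B| <= #|A| + #|B|.
Proof. by rewrite -cardsUI leq_addr. Qed.

Definition Zset (T : finType) k (s t : 'I_k -> T) : {set T} :=
  [set s j | j : 'I_k] :|: [set t j | j : 'I_k].

Lemma Zset_card (T : finType) k (s t : 'I_k -> T) : #|Zset s t| <= 2 * k.
Proof.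
apply: leq_trans (cardU_le _ _) _.
have h : forall f : 'I_k -> T, #|[set f j | j : 'I_k]| <= k.
  by move=> f; apply: leq_trans (leq_imset_card _ _) _; rewrite card_ord.
by rewrite mul2n -addnn leq_add.
Qed.

Lemma sZ (T : finType) k (s t : 'I_k -> T) j : s j \in Zset s t.
Proof. by rewrite !inE; apply/orP; left; apply/imsetP; exists j. Qed.
Lemma tZ (T : finType) k (s t : 'I_k -> T) j : t j \in Zset s t.
Proof. by rewrite !inE; apply/orP; right; apply/imsetP; exists j. Qed.

Lemma greedy_aux (T : finType) (e : rel T) k (s t : 'I_k -> T) (I : {set 'I_k})
  (A : {set T})
  (HX : forall Y, bipartite_minus e Y -> 2 * #|I| + 2 * k <= #|Y|) :
  forall n (J : {set 'I_k}), #|J| <= n -> J \subset I ->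
  exists m : 'I_k -> T * T,
   [/\ forall i, i \in J -> part_edge e A (m i).1 (m i).2,
       forall i j, i \in J -> j \in J -> i != j ->
         [disjoint [set (m i).1; (m i).2] & [set (m j).1; (m j).2]] &
       forall i, i \in J -> ((m i).1 \notin Zset s t) && ((m i).2 \notin Zset s t)].
Proof.
elim=> [|n IH] J HJ HJI.
  exists (fun i => (s i, s i)); move: HJ; rewrite leqn0 cards_eq0 => /eqP ->.
  by split=> i; rewrite inE.
case: (set_0Vmem J) => [->|[i Hi]].
  by exists (fun i => (s i, s i)); split=> i; rewrite inE.
have HJ' : #|J :\ i| <= n by move: HJ; rewrite (cardsD1 i J) Hi.
have HJI' : J :\ i \subset I by apply: subset_trans HJI; apply: subD1set.
have [m' [h1 h2 h3]] := IH _ HJ' HJI'.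
set Y := Zset s t :|: [set (m' j).1 | j in J :\ i] :|: [set (m' j).2 | j in J :\ i].
have HY : #|Y| < 2 * #|I| + 2 * k.
  have cJ : #|J :\ i| < #|I|.
    have := subset_leq_card HJI; rewrite (cardsD1 i J) Hi; done.
  have c1 := cardU_le (Zset s t :|: [set (m' j).1 | j in J :\ i]) [set (m' j).2 | j in J :\ i].
  have c2 := cardU_le (Zset s t) [set (m' j).1 | j in J :\ i].
  have c3 : #|[set (m' j).1 | j in J :\ i]| <= #|J :\ i| := leq_imset_card _ _.
  have c4 : #|[set (m' j).2 | j in J :\ i]| <= #|J :\ i| := leq_imset_card _ _.
  have c5 := Zset_card s t.
  rewrite /Y; lia.
have : [exists u, exists v, [&& u \notin Y, v \notin Y & part_edge e A u v]].
  case Hb : [exists u, exists v, [&& u \notin Y, v \notin Y & part_edge e A u v]] => //.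
  have Hn : ~ [exists u, exists v, [&& u \notin Y, v \notin Y & part_edge e A u v]] by rewrite Hb.
  have : bipartite_minus e Y.
    exists (fun u => u \in A) => u v Hu Hv Huv; apply/negP=> /eqP Heq.
    apply: Hn; apply/existsP; exists u; apply/existsP; exists v.
    by rewrite Hu Hv /part_edge Huv Heq eqxx.
  by move/HX; rewrite leqNgt HY.
case/existsP=> u /existsP [v /and3P [Hu Hv Huv]].
exists (fun j => if j == i then (u, v) else m' j); split.
- move=> j Hj; case: eqP => [_|/eqP Hji] //=.
  by apply: h1; rewrite !inE Hji.
- move=> j1 j2 Hj1 Hj2 Hne.
  have memY : forall w j, j \in J :\ i -> w \notin Y -> w \notin [set (m' j).1; (m' j).2].
    move=> w j Hj Hw; rewrite !inE; apply/negP=> /orP [] /eqP Hwj; move: Hw; rewrite Hwj; apply/negP/negPn.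
    * by rewrite /Y !inE; apply/orP; left; apply/orP; right; apply/imsetP; exists j.
    * by rewrite /Y !inE; apply/orP; right; apply/imsetP; exists j.
  case: (eqVneq j1 i) => [E1|N1]; case: (eqVneq j2 i) => [E2|N2].
  + by move: Hne; rewrite E1 E2 eqxx.
  + rewrite /= disj2 !memY //; rewrite !inE N2 //.
  + rewrite /= disjoint_sym disj2 !memY //; rewrite !inE N1 //.
  + by apply: h2; rewrite ?inE ?N1 ?N2.
- move=> j Hj; case: eqP => [_|/eqP Hji] /=.
  + by move: Hu Hv; rewrite !inE !negb_or => /andP [/andP [-> _] _] /andP [/andP [-> _] _].
  + by apply: h3; rewrite !inE Hji.
Qed.
Definition NiceW (T : finType) (e : rel T) (A X : {set T}) : Prop :=
  [/\ independent e (A :\: X), independent e (~: A :\: X),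
    (forall x, x \in X -> ndeg e x (A :\: X) < ndeg e x (~: A :\: X) -> x \in A) &
    (forall x, x \in X -> ndeg e x (~: A :\: X) < ndeg e x (A :\: X) -> x \in ~: A)].
Lemma NiceW_compl (T : finType) (e : rel T) (A X : {set T}) :
  NiceW e A X -> NiceW e (~: A) X.
Proof. case=> i1 i2 r1 r2; split; rewrite ?setCK //. Qed.

Definition Nb (T : finType) (e : rel T) (W P : {set T}) x :=
  #|[set y | (y \notin W) && (y \in P) && e x y]|.

Lemma indep_flip (T : finType) (e : rel T) (A X : {set T}) y z :
  NiceW e A X -> y \notin X -> z \notin X -> e y z -> (y \in A) = ~~ (z \in A).
Proof.
case=> i1 i2 _ _ Hy Hz Hyz.
case Ha: (y \in A); case Hb: (z \in A) => //=.
- by have := i1 y z; rewrite !inE Ha Hb Hy Hz Hyz => /(_ isT isT).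
- by have := i2 y z; rewrite !inE Ha Hb Hy Hz Hyz => /(_ isT isT).
Qed.

Lemma uniq_bip (T : finType) (e : rel T) c (A0 X0 A X W : {set T}) :
  NiceW e A0 X0 -> NiceW e A X -> X0 \subset W -> X \subset W ->
  k_connected e c -> #|W| < c ->
  (forall y, y \notin W -> (y \in A0) = (y \in A)) \/
  (forall y, y \notin W -> (y \in A0) = (y \in ~: A)).
Proof.
move=> N0 N sX0 sX [Hc Hcon] HW.
have : ~~ ([set: T] \subset W).
  apply/negP=> /subset_leq_card; rewrite cardsT => H.
  by move: (leq_ltn_trans H (ltn_trans HW Hc)); rewrite ltnn.
case/subsetPn=> v _ Hv.
pose f y := (y \in A0) == (y \in A).
have step : forall y z, y \notin W -> z \notin W -> e y z -> f y = f z.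
  move=> y z Hy Hz Hyz.
  have Hy0 : y \notin X0 by apply: contra Hy; apply: (subsetP sX0).
  have Hz0 : z \notin X0 by apply: contra Hz; apply: (subsetP sX0).
  have Hy1 : y \notin X by apply: contra Hy; apply: (subsetP sX).
  have Hz1 : z \notin X by apply: contra Hz; apply: (subsetP sX).
  rewrite /f (indep_flip N0 Hy0 Hz0 Hyz) (indep_flip N Hy1 Hz1 Hyz).
  by case: (z \in A0); case: (z \in A).
have pth : forall p w, w \notin W -> path (del_rel e W) w p -> f (last w p) = f w.
  elim=> [|z p IH] w Hw //= /andP [/and3P [Hwz _ Hz] Hp].
  by rewrite (IH z Hz Hp) (step w z Hw Hz Hwz).
have key : forall y, y \notin W -> f y = f v.
  move=> y Hy; case/connectP: (Hcon W HW v y Hv Hy) => p Hp ->.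
  exact: pth.
case Hfv: (f v); [left|right] => y Hy; have := key y Hy; rewrite Hfv /f.
- by move/eqP.
- by rewrite inE; case: (y \in A0); case: (y \in A).
Qed.

Lemma deg_split (T : finType) (e : rel T) (W P : {set T}) x :
  #|[set y | e x y]| <= #|W| + Nb e W P x + Nb e W (~: P) x.
Proof.
rewrite /Nb.
apply: leq_trans (_ : #|W :|: [set y | (y \notin W) && (y \in P) && e x y]
   :|: [set y | (y \notin W) && (y \in ~: P) && e x y]| <= _).
  apply: subset_leq_card; apply/subsetP=> y; rewrite !inE => Hxy.
  by rewrite Hxy; case: (y \in W); case: (y \in P).
apply: leq_trans (cardU_le _ _) _; rewrite leq_add2r; exact: cardU_le.
Qed.

Lemma noflip (T : finType) (e : rel T) c (A0 X0 A X W : {set T}) x :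
  NiceW e A0 X0 -> NiceW e A X -> X0 \subset W -> X \subset W ->
  (forall y, y \notin W -> (y \in A0) = (y \in A)) ->
  (forall z, c <= #|[set y | e z y]|) -> 2 * #|W| < c ->
  x \in X0 -> x \notin X -> x \in A -> x \in A0.
Proof.
move=> N0 N sX0 sX agr Hdeg Hc Hx0 Hx Hxa.
apply/idPn=> Hxa0.
case: N0 => _ _ r1 _; case: (N) => i1 _ _ _.
apply: (negP Hxa0); apply: r1 => //.
have le1 : ndeg e x (A0 :\: X0) <= #|W|.
  apply: subset_leq_card; apply/subsetP=> y; rewrite !inE => /andP [/andP [Hy0 Hya0] Hxy].
  apply/idPn=> Hy.
  have Hy1 : y \notin X by apply: contra Hy; apply: (subsetP sX).
  by move: (i1 x y); rewrite !inE Hx Hxa Hy1 -agr // Hya0 Hxy => /(_ isT isT).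
have le2 : #|[set y | (y \notin W) && e x y]| <= ndeg e x (~: A0 :\: X0).
  apply: subset_leq_card; apply/subsetP=> y; rewrite !inE => /andP [Hy Hxy].
  have Hy0 : y \notin X0 by apply: contra Hy; apply: (subsetP sX0).
  have Hy1 : y \notin X by apply: contra Hy; apply: (subsetP sX).
  rewrite Hy0 Hxy agr //=; case Hya: (y \in A) => //.
  by move: (i1 x y); rewrite !inE Hx Hxa Hy1 Hya Hxy => /(_ isT isT).
have le3 : #|[set y | e x y]| <= #|W| + #|[set y | (y \notin W) && e x y]|.
  apply: leq_trans (cardU_le W _); apply: subset_leq_card; apply/subsetP=> y.
  by rewrite !inE => ->; rewrite andbT; case: (y \in W).
have := Hdeg x; lia.
Qed.

Lemma flip1 (T : finType) (e : rel T) c (A0 X0 A X W : {set T}) x :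
  NiceW e A0 X0 -> NiceW e A X -> X0 \subset W -> X \subset W ->
  (forall y, y \notin W -> (y \in A0) = (y \in A)) ->
  (forall z, c <= #|[set y | e z y]|) ->
  x \in X0 -> x \in X -> x \in A0 -> x \notin A ->
  c <= 2 * Nb e W A0 x + 2 * #|W| /\ c <= 2 * Nb e W (~: A0) x + 2 * #|W|.
Proof.
move=> N0 N sX0 sX agr Hdeg Hx0 Hx Hxa0 Hxa.
case: N0 => _ _ _ r2; case: N => _ _ r1 _.
have h1 : ndeg e x (A0 :\: X0) <= ndeg e x (~: A0 :\: X0).
  rewrite leqNgt; apply/negP=> /(r2 x Hx0); by rewrite inE Hxa0.
have h2 : ndeg e x (~: A :\: X) <= ndeg e x (A :\: X).
  rewrite leqNgt; apply/negP=> /(r1 x Hx); by rewrite (negbTE Hxa).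
have a1 : Nb e W A0 x <= ndeg e x (A0 :\: X0).
  apply: subset_leq_card; apply/subsetP=> y; rewrite !inE => /andP [/andP [Hy ->] ->].
  by rewrite !andbT; apply: contra Hy; apply: (subsetP sX0).
have a2 : ndeg e x (~: A0 :\: X0) <= #|W| + Nb e W (~: A0) x.
  apply: leq_trans (cardU_le W _); apply: subset_leq_card; apply/subsetP=> y.
  rewrite !inE => /andP [/andP [_ ->] ->]; by case: (y \in W).
have a3 : Nb e W (~: A0) x <= ndeg e x (~: A :\: X).
  apply: subset_leq_card; apply/subsetP=> y; rewrite !inE => /andP [/andP [Hy Hya] ->].
  rewrite -agr // Hya !andbT; by apply: contra Hy; apply: (subsetP sX).
have a4 : ndeg e x (A :\: X) <= #|W| + Nb e W A0 x.
  apply: leq_trans (cardU_le W _); apply: subset_leq_card; apply/subsetP=> y.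
  rewrite !inE => /andP [/andP [_ Hya] ->]; case Hy: (y \in W) => //=.
  by rewrite agr ?Hy // Hya.
have := deg_split e W A0 x; have := Hdeg x; lia.
Qed.

Lemma flips (T : finType) (e : rel T) c (A0 X0 A X W : {set T}) x :
  NiceW e A0 X0 -> NiceW e A X -> X0 \subset W -> X \subset W -> W \subset X0 :|: X ->
  (forall y, y \notin W -> (y \in A0) = (y \in A)) ->
  (forall z, c <= #|[set y | e z y]|) -> 2 * #|W| < c ->
  (x \in A0) != (x \in A) ->
  c <= 2 * Nb e W A0 x + 2 * #|W| /\ c <= 2 * Nb e W (~: A0) x + 2 * #|W|.
Proof.
move=> N0 N sX0 sX sW agr Hdeg Hc Hne.
have agr' : forall y, y \notin W -> (y \in A) = (y \in A0) by move=> y Hy; rewrite agr.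
have agrC : forall y, y \notin W -> (y \in ~: A0) = (y \in ~: A) by move=> y Hy; rewrite !inE agr.
have N0C := NiceW_compl N0. have NC := NiceW_compl N.
case HxW: (x \in W); last by move: Hne; rewrite agr ?HxW // eqxx.
case Hx0: (x \in X0); case Hx: (x \in X).
- case Ha0: (x \in A0); case Ha: (x \in A); rewrite Ha0 Ha in Hne; try by rewrite eqxx in Hne.
  + by apply: (flip1 N0 N) => //; rewrite Ha.
  + have H1 : x \in ~: A0 by rewrite inE Ha0.
    have H2 : x \notin ~: A by rewrite inE Ha.
    have [h1 h2] := flip1 N0C NC sX0 sX agrC Hdeg Hx0 Hx H1 H2.
    by rewrite setCK in h2.
- exfalso; move: Hne; case Ha: (x \in A).
  + by rewrite (noflip N0 N sX0 sX agr Hdeg Hc Hx0) ?Hx.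
  + have := noflip N0C NC sX0 sX agrC Hdeg Hc Hx0; rewrite Hx !inE Ha => /(_ isT isT).
    by move/negbTE => ->.
- exfalso; move: Hne; case Ha: (x \in A0).
  + by rewrite (noflip N N0 sX sX0 agr' Hdeg Hc Hx) ?Hx0.
  + have agrC' : forall y, y \notin W -> (y \in ~: A) = (y \in ~: A0) by move=> y Hy; rewrite !inE agr.
    have := noflip NC N0C sX sX0 agrC' Hdeg Hc Hx; rewrite Hx0 !inE Ha => /(_ isT isT).
    by move/negbTE => ->.
- by move: (subsetP sW x); rewrite HxW inE Hx0 Hx => /(_ isT).
Qed.

Lemma transfer (T : finType) (e : rel T) k (s t : 'I_k -> T) (I : {set 'I_k})
  (A0 A W : {set T}) :
  has_pbm e s t I A0 ->
  (forall y, y \notin W -> (y \in A0) = (y \in A)) ->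
  (forall x, (x \in A0) != (x \in A) ->
     2 * #|I| + 2 * k < Nb e W A0 x /\ 2 * #|I| + 2 * k < Nb e W (~: A0) x) ->
  has_pbm e s t I A.
Proof.
case=> m [p1 p2 p3] agr Hfl.
suff aux : forall n (J : {set 'I_k}), #|J| <= n -> exists m' : 'I_k -> T * T,
  [/\ forall i, i \in I -> i \in J -> part_edge e A (m' i).1 (m' i).2,
      forall i, i \in I -> i \notin J -> m' i = m i,
      forall i j, i \in I -> j \in I -> i != j ->
         [disjoint [set (m' i).1; (m' i).2] & [set (m' j).1; (m' j).2]] &
      forall i j, i \in I -> j != i ->
         [disjoint [set (m' i).1; (m' i).2] & [set s j; t j]]].
  have [m' [q1 q2 q3 q4]] := aux _ [set: 'I_k] (leqnn _).
  by exists m'; split=> // i Hi; apply: q1; rewrite ?inE.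
elim=> [|n IH] J HJ.
  exists m; move: HJ; rewrite leqn0 cards_eq0 => /eqP ->.
  by split=> // i; rewrite inE.
case: (set_0Vmem J) => [->|[i Hi]].
  by exists m; split=> // i; rewrite inE.
have HJ' : #|J :\ i| <= n by move: HJ; rewrite (cardsD1 i J) Hi.
have [m' [h1 h2 h3 h4]] := IH _ HJ'.
have inJ' : forall j, j \in J -> j != i -> j \in J :\ i by move=> j Hj Hji; rewrite !inE Hji.
have notJ' : forall j, j \notin J -> j \notin J :\ i.
  by move=> j; apply: contra; rewrite !inE => /andP [].
case HiI: (i \in I); last first.
  exists m'; split=> //.
  - move=> j Hj HjJ; apply: h1 => //; apply: inJ' => //; apply/eqP=> E.
    by move: Hj; rewrite E HiI.
  - by move=> j Hj HjJ; apply: h2 => //; apply: notJ'.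
have Hmi : m' i = m i by apply: h2; rewrite ?inE ?eqxx.
case Hpe: (part_edge e A (m' i).1 (m' i).2).
  exists m'; split=> //.
  - move=> j Hj HjJ; case: (eqVneq j i) => [->|Hji] //.
    by apply: h1 => //; apply: inJ'.
  - by move=> j Hj HjJ; apply: h2 => //; apply: notJ'.
set a := (m' i).1. set b := (m' i).2.
pose x := if (a \in A0) != (a \in A) then a else b.
have Hxab : x \in [set a; b] by rewrite /x; case: ifP; rewrite !inE eqxx ?orbT.
have Hxfl : (x \in A0) != (x \in A).
  have := p1 i HiI; rewrite -Hmi -/a -/b /part_edge => /andP [Heab Hab0].
  move: Hpe; rewrite /part_edge -/a -/b Heab /= => Hab.
  rewrite /x; case: ifP => // /negbFE /eqP Ha.
  move: Hab Hab0 Ha; case: (a \in A0); case: (a \in A); case: (b \in A0); case: (b \in A) => //.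
pose P := if x \in A then A0 else ~: A0.
pose C := [set y | (y \notin W) && (y \in P) && e x y].
pose F := Zset s t :|: [set (m' j).1 | j in I] :|: [set (m' j).2 | j in I].
have HC : #|F| < #|C|.
  have c1 := cardU_le (Zset s t :|: [set (m' j).1 | j in I]) [set (m' j).2 | j in I].
  have c2 := cardU_le (Zset s t) [set (m' j).1 | j in I].
  have c3 : #|[set (m' j).1 | j in I]| <= #|I| := leq_imset_card _ _.
  have c4 : #|[set (m' j).2 | j in I]| <= #|I| := leq_imset_card _ _.
  have c5 := Zset_card s t.
  have [c6 c7] := Hfl x Hxfl.
  have c8 : #|C| = if x \in A then Nb e W A0 x else Nb e W (~: A0) x.
    by rewrite /C /P; case: (x \in A).
  rewrite /F c8; case: (x \in A); lia.
have : ~~ (C \subset F) by apply/negP=> /subset_leq_card; rewrite leqNgt HC.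
case/subsetPn=> y; rewrite !inE => /andP [/andP [HyW HyP] Hxy] HyF.
have memF : forall j, j \in I -> y \notin [set (m' j).1; (m' j).2].
  move=> j Hj; rewrite !inE; apply/negP=> /orP [] /eqP Hyj; move: HyF; rewrite Hyj.
  - by rewrite (_ : (m' j).1 \in [set (m' j).1 | j in I]) ?orbT //; apply/imsetP; exists j.
  - by rewrite (_ : (m' j).2 \in [set (m' j).2 | j in I]) ?orbT //; apply/imsetP; exists j.
have HyZ : y \notin Zset s t by apply/negP=> H; move: HyF; rewrite /Zset inE in H; rewrite H.
have Hpxy : part_edge e A x y.
  rewrite /part_edge Hxy -(agr y HyW); move: HyP; rewrite /P; case: (x \in A) => /= H.
  - by rewrite H.
  - by move: H; rewrite inE => /negbTE ->.
exists (fun j => if j == i then (x, y) else m' j); split.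
- move=> j Hj HjJ; case: eqP => [_|/eqP Hji] //=.
  by apply: h1 => //; apply: inJ'.
- move=> j Hj HjJ; case: eqP => [E|_]; first by move: HjJ; rewrite E Hi.
  by apply: h2 => //; apply: notJ'.
- move=> j1 j2 Hj1 Hj2 Hne.
  have xnot : forall j, j \in I -> j != i -> x \notin [set (m' j).1; (m' j).2].
    move=> j Hj Hji; apply/negP=> Hx.
    have Hij : i != j by rewrite eq_sym.
    by move: (disjointFr (h3 i j HiI Hj Hij) Hxab); rewrite Hx.
  case: (eqVneq j1 i) => [E1|N1]; case: (eqVneq j2 i) => [E2|N2] /=.
  + by move: Hne; rewrite E1 E2 eqxx.
  + by rewrite disj2 xnot ?memF.
  + by rewrite disjoint_sym disj2 xnot ?memF.
  + by apply: h3.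
- move=> j1 j Hj1 Hne; case: (eqVneq j1 i) => [E1|N1] /=.
  + rewrite disj2; apply/andP; split.
    * have Hji : j != i by rewrite -E1.
      by apply/negP=> Hx; move: (disjointFr (h4 i j HiI Hji) Hxab); rewrite Hx.
    * by rewrite !inE; apply/norP; split; apply/negP=> /eqP E; move: HyZ;
        rewrite E ?sZ ?tZ.
  + by apply: h4.
Qed.

Lemma has_pbm_compl (T : finType) (e : rel T) k (s t : 'I_k -> T) I (A : {set T}) :
  has_pbm e s t I A -> has_pbm e s t I (~: A).
Proof.
case=> m [h1 h2 h3]; exists m; split=> // i Hi.
by move: (h1 i Hi); rewrite /part_edge !inE; case: (_ \in A); case: (_ \in A).
Qed.

Lemma deg_ge (T : finType) (e : rel T) (e_irr : irreflexive e) c x :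
  k_connected e c -> c <= #|[set y | e x y]|.
Proof.
case=> Hc Hcon; rewrite leqNgt; apply/negP=> Hlt.
set Y := [set y | e x y] in Hlt.
have sub : [set: T] \subset x |: Y.
  apply/subsetP=> v _; rewrite !inE; apply/negPn/negP; rewrite negb_or=> /andP [Hvx HvY].
  have HxY : x \notin Y by rewrite inE e_irr.
  have HvY2 : v \notin Y by rewrite inE.
  move: (Hcon Y Hlt x v HxY HvY2) => /connectP [p].
  case: p => [_ /= Hv|z p /=]; first by move: Hvx; rewrite Hv eqxx.
  by case/andP=> /and3P [Hxz _ HzY] _ _; move: HzY; rewrite inE Hxz.
move: (subset_leq_card sub); rewrite cardsT cardsU1 => H.
have : #|T| <= c by apply: leq_trans H _; case: (_ \notin _) => /=; rewrite ?add1n ?add0n // ltnW.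
by rewrite leqNgt Hc.
Qed.

Lemma case1 (T : finType) (e : rel T) k (s t : 'I_k -> T) (I : {set 'I_k}) (A : {set T})
  (HX : forall Y, bipartite_minus e Y -> 2 * #|I| + 2 * k <= #|Y|) :
  has_pbm e s t I A.
Proof.
have [m [h1 h2 h3]] := greedy_aux s t A HX (leqnn #|I|) (subxx I).
exists m; split=> // i j Hi Hji.
rewrite disj2; move/andP: (h3 i Hi) => [H1 H2].
by apply/andP; split; rewrite !inE; apply/norP; split; apply/negP=> /eqP E;
  [move: H1|move: H1|move: H2|move: H2]; rewrite E ?sZ ?tZ.
Qed.

Lemma min_occ_exists (T : finType) (e : rel T) : exists X, min_odd_cycle_cover e X.
Proof.
suff : forall n (Y : {set T}), #|Y| <= n -> odd_cycle_cover e Y ->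
  exists X, min_odd_cycle_cover e X.
  move/(_ #|[set: T]| [set: T] (leqnn _)); apply; exists (fun _ => true) => u v; by rewrite in_setT.
elim=> [|n IH] Y HY HocY.
  exists Y; split=> // Z _; move: HY; rewrite leqn0 => /eqP ->; done.
case: (classic (exists Z, odd_cycle_cover e Z /\ #|Z| < #|Y|)).
  by case=> Z [HZ HZY]; apply: (IH Z) => //; lia.
move=> Hn; exists Y; split=> // Z HZ; rewrite leqNgt; apply/negP=> H.
by apply: Hn; exists Z.
Qed.

Lemma nice_exists (T : finType) (e : rel T) : exists A, nice e A.
Proof.
have [X [[c Hc] Hmin]] := min_occ_exists e.
pose A0 := [set x | (x \notin X) && c x].
pose B0 := [set x | (x \notin X) && ~~ c x].
pose A := A0 :|: [set x in X | ndeg e x A0 <= ndeg e x B0].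
have EA : A :\: X = A0.
  apply/setP=> x; rewrite !inE; case: (x \in X); rewrite ?andbF ?orbF //=.
have EB : ~: A :\: X = B0.
  apply/setP=> x; rewrite !inE; case: (x \in X); rewrite /= ?andbF ?orbF //=.
exists A, X; rewrite EA EB; split.
- by split; [exists c | move=> Y HY; apply: Hmin].
- move=> u v; rewrite !inE => /andP [Hu cu] /andP [Hv cv]; apply/negP=> Huv.
  by move: (Hc u v Hu Hv Huv); rewrite cu cv.
- move=> u v; rewrite !inE => /andP [Hu cu] /andP [Hv cv]; apply/negP=> Huv.
  by move: (Hc u v Hu Hv Huv); rewrite (negbTE cu) (negbTE cv).
- by move=> x Hx H; rewrite !inE Hx /= ltnW // orbT.
- move=> x Hx H; rewrite !inE Hx /=.
  by rewrite -ltnNge.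
Qed.

Theorem corollary5 (T : finType) (e : rel T) (e_sym : symmetric e)
  (e_irr : irreflexive e) (k : nat) (k_pos : 0 < k) (I : {set 'I_k})
  (s t : 'I_k -> T)
  (s_inj : injective s) (t_inj : injective t) (st_dis : forall i j, s i != t j)
  (conn : k_connected e (26 * k + 24 * #|I|)) :
  (exists A : {set T}, nice e A /\ has_pbm e s t I A) <->
  (forall A : {set T}, nice e A -> has_pbm e s t I A).
Proof.
split; last first.
  by move=> H; have [A HA] := nice_exists e; exists A; split => //; apply: H.
case=> A0 [[X0 [min0 i1 i2 r1 r2]] pbm0] A [X [min i1' i2' r1' r2']].
have N0 : NiceW e A0 X0 by split.
have N : NiceW e A X by split.
case: (leqP (2 * #|I| + 2 * k) #|X|) => Hbig.
  by apply: case1 => Y HY; apply: leq_trans Hbig (proj2 min Y HY).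
have H0 : #|X0| <= #|X| := proj2 min0 X (proj1 min).
set W := X0 :|: X.
have HW : #|W| <= #|X0| + #|X| := cardU_le X0 X.
have Hdeg : forall z, 26 * k + 24 * #|I| <= #|[set y | e z y]|.
  by move=> z; apply: deg_ge.
have sX0 : X0 \subset W by apply: subsetUl.
have sX : X \subset W by apply: subsetUr.
have Hc1 : #|W| < 26 * k + 24 * #|I| by lia.
have Hc2 : 2 * #|W| < 26 * k + 24 * #|I| by lia.
case: (uniq_bip N0 N sX0 sX conn Hc1) => agr.
- apply: (transfer pbm0 agr) => x fl.
  have [a b] := flips N0 N sX0 sX (subxx W) agr Hdeg Hc2 fl.
  split; lia.
- have NC := NiceW_compl N.
  rewrite -(setCK A); apply: has_pbm_compl.
  apply: (transfer pbm0 agr) => x fl.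
  have [a b] := flips N0 NC sX0 sX (subxx W) agr Hdeg Hc2 fl.
  split; lia.
Qed.
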